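(* Let $D$ be a bipartite digraph on $n$ vertices and let $S_1,S_2$ be sidigraphs with underlying digraph $D$ such that $S_1\in\Delta^1_n$ and $S_2\in\Delta^2_n$. Then $\phi_{S_1}(\iota z)=\epsilon\,\phi_{S_2}(z)$ where $\epsilon=\iota$ if $n\equiv1\pmod 4$, $\epsilon=-\iota$ if $n\equiv 3\pmod 4$, $\epsilon=1$ if $n\equiv 0\pmod 4$, and $\epsilon=-1$ if $n\equiv 2\pmod 4$. Consequently $\mathrm{spec}(S_1)=\iota\,\mathrm{spec}(S_2)$, and if $z_{i1},\dots,z_{in}$ are the eigenvalues of $S_i$ ($i=1,2$), then $E(S_1)=\sum_{j=1}^n|\Im z_{2j}|$ and $E(S_2)=\sum_{j=1}^n|\Im z_{1j}|$.
   Context: A sidigraph is a digraph (no loops, at most one arc from $u$ to $v$) with a sign $\sigma(a)\in\{-1,1\}$ on each arc; its adjacency matrix $A(S)$ has entry $\sigma(v_i,v_j)$ if there is an arc from $v_i$ to $v_j$ and $0$ otherwise, $\phi_S(z)=\det(zI-A(S))$, and $\mathrm{spec}(S)$ is the multiset of its eigenvalues. The energy is $E(S)=\sum_j|\Re z_j|$ over the eigenvalues $z_j$; $\Im$ denotes imaginary part and $\iota=\sqrt{-1}$. The sign of a directed cycle is the product of its arc signs. $\Delta^1_n$: sidigraphs on $n$ vertices with bipartite underlying digraph in which every directed cycle of length $\equiv0\pmod4$ is negative and every directed cycle of length $\equiv2\pmod 4$ is positive. $\Delta^2_n$: sidigraphs on $n$ vertices with bipartite underlying digraph in which every directed cycle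 is negative. *)

(* Defs.v *)
(* Complex numbers are modelled by algC. *)
From HB Require Import structures.
From mathcomp Require Import all_boot all_order all_algebra all_field.
Set Implicit Arguments. Unset Strict Implicit. Unset Printing Implicit Defensive.
Import Order.TTheory GRing.Theory Num.Theory.
Local Open Scope ring_scope.

Definition digraph n (arc : rel 'I_n) : Prop := forall i, ~~ arc i i.

Definition signing n (arc : rel 'I_n) (sigma : 'I_n -> 'I_n -> algC) : Prop :=
  forall i j, arc i j -> sigma i j = 1 \/ sigma i j = -1.

Definition adj n (arc : rel 'I_n) (sigma : 'I_n -> 'I_n -> algC) : 'M[algC]_n :=
  \matrix_(i, j) (if arc i j then sigma i j else 0).

Definition charpoly_sd n (arc : rel 'I_n) (sigma : 'I_n -> 'I_n -> algC)
  : {poly algC} := char_poly (adj arc sigma).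

Definition bipartite n (arc : rel 'I_n) : Prop :=
  exists part : 'I_n -> bool, forall i j, arc i j -> part i != part j.

Definition dcycle n (arc : rel 'I_n) (c : seq 'I_n) : bool :=
  [&& (2 <= size c)%N, uniq c & cycle arc c].

Definition cycle_sign n (sigma : 'I_n -> 'I_n -> algC) (c : seq 'I_n) : algC :=
  \prod_(p <- zip c (rot 1 c)) sigma p.1 p.2.

Definition Delta1 n (arc : rel 'I_n) (sigma : 'I_n -> 'I_n -> algC) : Prop :=
  digraph arc /\ signing arc sigma /\ bipartite arc /\
  (forall c, dcycle arc c ->
     ((size c %% 4)%N = 0%N -> cycle_sign sigma c = -1) /\
     ((size c %% 4)%N = 2%N -> cycle_sign sigma c = 1)).

Definition Delta2 n (arc : rel 'I_n) (sigma : 'I_n -> 'I_n -> algC) : Prop :=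
  digraph arc /\ signing arc sigma /\ bipartite arc /\
  (forall c, dcycle arc c -> cycle_sign sigma c = -1).

Definition is_spec n (arc : rel 'I_n) (sigma : 'I_n -> 'I_n -> algC)
  (s : seq algC) : Prop :=
  charpoly_sd arc sigma = \prod_(z <- s) ('X - z%:P).

Definition energy (s : seq algC) : algC := \sum_(z <- s) `|'Re z|.

Definition eps_n (n : nat) : algC :=
  match (n %% 4)%N with
  | 0 => 1
  | 1 => 'i
  | 2 => -1
  | _ => - 'i
  end.

(* Main.v *)
Require Import Defs.
From HB Require Import structures.
From mathcomp Require Import all_boot all_order all_algebra all_field all_fingroup.
From mathcomp Require Import zify ring.
Import Order.TTheory GRing.Theory Num.Theory.
Local Open Scope ring_scope.
Lemma cycle_traject (T : eqType) (f : T -> T) x k :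
  iter k f x = x -> fcycle f (traject f x k).
Proof.
case: k => [|k] // Hk; rewrite trajectS /= -[x in rcons _ x]Hk iterSr -trajectSr.
exact: fpath_traject.
Qed.

Arguments cycle_traject {T f x k}.

Lemma map_traject (T : Type) (f : T -> T) x k :
  map f (traject f x k) = traject f (f x) k.
Proof. by elim: k x => [|k IH] x //=; rewrite IH. Qed.

Lemma rot_traject (T : Type) (f : T -> T) x k :
  iter k f x = x -> rot 1 (traject f x k) = map f (traject f x k).
Proof.
case: k => [|k] // Hk; rewrite map_traject trajectS rot1_cons trajectSr.
by rewrite -iterSr Hk.
Qed.

Lemma zip_mapr (T : Type) (f : T -> T) s :
  zip s (map f s) = map (fun i => (i, f i)) s.
Proof. by elim: s => //= a s ->. Qed.

Lemma prod_scale_seq (R : comNzRingType) (T : Type) (c : R) (f : T -> R) s :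
  \prod_(z <- s) (c * f z) = c ^+ size s * \prod_(z <- s) f z.
Proof.
elim: s => [|a s IH]; first by rewrite !big_nil mulr1.
by rewrite !big_cons IH exprS /=; ring.
Qed.

Lemma expi_mod k : 'i ^+ k = 'i ^+ (k %% 4) :> algC.
Proof.
rewrite {1}(divn_eq k 4) exprD mulnC exprM.
have -> : ('i ^+ 4 : algC) = 1 by rewrite (exprM 'i 2 2) sqrCi sqrrN expr1n.
by rewrite expr1n mul1r.
Qed.

Lemma orbit_eq n (arc : rel 'I_n) (sigma1 sigma2 : 'I_n -> 'I_n -> algC)
  (s : 'S_n) x :
  Delta1 arc sigma1 -> Delta2 arc sigma2 -> s x != x ->
  \prod_(i in porbit s x) (adj arc sigma1) i (s i)
  = \prod_(i in porbit s x) ('i *: adj arc sigma2) i (s i).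
Proof.
move=> [_ [_ [[part Hpart] H1]]] [_ [_ [_ H2]]] Hx.
set k := #|porbit s x|; set c := traject s x k.
have Uc : uniq c := uniq_traject_porbit s x.
have Ic : iter k s x = x := iter_porbit s x.
have conv : forall F : 'I_n -> algC,
    \prod_(i in porbit s x) F i = \prod_(i <- c) F i.
  by move=> F; rewrite (big_uniq _ Uc); apply: eq_bigl => i; rewrite porbit_traject.
rewrite !conv.
case: (boolP (all (fun i => arc i (s i)) c)) => Hall; last first.
  move/allPn: Hall => [i Hi Hn].
  by rewrite !(big_rem i Hi) /= !mxE (negbTE Hn) mulr0 !mul0r.
have Hk2 : (2 <= k)%N.
  have Hk0 := card_porbit_neq0 s x; rewrite -/k in Hk0.
  have Hk1 : k != 1%N by apply: contraNneq Hx => Hk1; rewrite -{2}Ic Hk1.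
  lia.
have Dc : dcycle arc c.
  rewrite /dcycle size_traject Hk2 Uc /=.
  have Cf : path.cycle (frel s) c := cycle_traject Ic.
  have Sub : {in mem c &, subrel (frel s) arc}.
    by move=> a b Ha _ /eqP <-; exact: (allP Hall).
  have All : all (mem c) c by apply/allP.
  exact: (sub_in_cycle Sub All Cf).
have sgn : forall sg, cycle_sign sg c = \prod_(i <- c) sg i (s i).
  by move=> sg; rewrite /cycle_sign rot_traject // zip_mapr big_map.
have LA : \prod_(i <- c) (adj arc sigma1) i (s i) = cycle_sign sigma1 c.
  by rewrite sgn; apply: eq_big_seq => i Hi; rewrite mxE (allP Hall i Hi).
have LB : \prod_(i <- c) ('i *: adj arc sigma2) i (s i) = 'i ^+ k * cycle_sign sigma2 c.
  rewrite sgn -[k](size_traject s x) -prod_scale_seq.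
  by apply: eq_big_seq => i Hi; rewrite !mxE (allP Hall i Hi).
have Hp : forall j, (j <= k)%N -> part (iter j s x) = part x (+) odd j.
  elim=> [|j IH] Hj; first by rewrite addbF.
  have Hin : iter j s x \in c.
    by rewrite /c -(nth_traject _ Hj) mem_nth // size_traject.
  have := Hpart _ _ (allP Hall _ Hin); rewrite iterS (IH (ltnW Hj)) /=.
  by case: (part (s (iter j s x))); case: (part x); case: (odd j).
have Ek : ~~ odd k.
  have := Hp k (leqnn k); rewrite Ic.
  by case: (part x); case: (odd k).
have Hmod : (k %% 4 = 0 \/ k %% 4 = 2)%N.
  have : (k %% 2 = 0)%N by rewrite modn2 (negbTE Ek).
  lia.
rewrite LA LB expi_mod -/c.
have [C0 C2] := H1 c Dc; rewrite size_traject in C0 C2.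
rewrite (H2 c Dc).
case: Hmod => Hm; rewrite Hm.
  by rewrite C0 // expr0 mul1r.
by rewrite C2 // sqrCi mulrN1 opprK.
Qed.

Lemma det_moved (R : comNzRingType) n (M1 M2 : 'M[R]_n) :
  (forall i, M1 i i = M2 i i) ->
  (forall s : 'S_n, \prod_(i | s i != i) M1 i (s i) = \prod_(i | s i != i) M2 i (s i)) ->
  \det M1 = \det M2.
Proof.
move=> Hd Hm; rewrite /determinant; apply: eq_bigr => s _; congr (_ * _).
rewrite (bigID (fun i => s i == i)) [RHS](bigID (fun i => s i == i)) /= Hm.
congr (_ * _); apply: eq_bigr => i /eqP ->; exact: Hd.
Qed.

Lemma prod_moved_orbits n (s : 'S_n) (F G : 'I_n -> algC) :
 (forall x, s x != x -> \prod_(i in porbit s x) F i = \prod_(i in porbit s x) G i) ->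
 \prod_(i | s i != i) F i = \prod_(i | s i != i) G i.
Proof.
move=> H.
have E : forall x, s x != x -> forall F' : 'I_n -> algC,
  \prod_(i in [pred i | s i != i] | porbit s i == porbit s x) F' i
  = \prod_(i in porbit s x) F' i.
  move=> x Hx F'; apply: eq_bigl => i /=.
  rewrite eq_porbit_mem; case Hi: (i \in porbit s x); rewrite ?andbF ?andbT //.
  apply/eqP => si; move: Hi; rewrite porbit_sym => /porbitP [j].
  rewrite permX iter_fix // => xi; by rewrite xi si eqxx in Hx.
have P : forall F' : 'I_n -> algC, \prod_(i | s i != i) F' i = \prod_(i in [pred i | s i != i]) F' i by [].
rewrite !P !(partition_big_imset (porbit s)).
apply: eq_bigr => O /imsetP [x Hx ->].
by rewrite !E // H.
Qed.

Lemma charpoly_eq n (arc : rel 'I_n) (sigma1 sigma2 : 'I_n -> 'I_n -> algC) :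
  digraph arc -> Delta1 arc sigma1 -> Delta2 arc sigma2 ->
  char_poly (adj arc sigma1) = char_poly ('i *: adj arc sigma2).
Proof.
move=> Hdig D1 D2; apply: det_moved.
  by move=> i; rewrite !mxE (negbTE (Hdig i)) mulr0.
move=> s.
have E : forall M : 'M[algC]_n, \prod_(i | s i != i) char_poly_mx M i (s i)
    = (\prod_(i | s i != i) - M i (s i))%:P.
  move=> M; rewrite rmorph_prod; apply: eq_bigr => i Hi.
  by rewrite !mxE eq_sym (negbTE Hi) mulr0n sub0r rmorphN.
rewrite !E; congr (_%:P).
have N : forall M : 'M[algC]_n, \prod_(i | s i != i) - M i (s i)
    = \prod_(i | s i != i) (-1) * \prod_(i | s i != i) M i (s i).
  by move=> M; rewrite -big_split; apply: eq_bigr => i _; rewrite /= mulN1r.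
rewrite !N; congr (_ * _); apply: prod_moved_orbits => x Hx.
exact: orbit_eq.
Qed.

Lemma charpoly_ev n (M : 'M[algC]_n) z : (char_poly M).[z] = \det (z%:M - M).
Proof.
rewrite /char_poly -horner_evalE -det_map_mx; congr (\det _).
by apply/matrixP => i j; rewrite !mxE rmorphB rmorphMn /= !horner_evalE hornerX hornerC.
Qed.

Lemma poly_ev (p q : {poly algC}) : (forall x, p.[x] = q.[x]) -> p = q.
Proof.
move=> H; apply/eqP; rewrite -subr_eq0; apply/negPn/negP => Hne.
set rs := [seq i%:R | i <- iota 0 (size (p - q))] : seq algC.
have Hall : all (root (p - q)) rs.
  by apply/allP => y _; rewrite /root !hornerE H subrr.
have Hu : uniq rs.
  rewrite map_inj_uniq ?iota_uniq // => a b /eqP; rewrite eqr_nat => /eqP //.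
have := max_poly_roots Hne Hall Hu.
by rewrite size_map size_iota ltnn.
Qed.

Lemma eps_nE n : eps_n n = 'i ^+ n.
Proof.
rewrite expi_mod /eps_n; have : (n %% 4 < 4)%N by rewrite ltn_mod.
case: (n %% 4)%N => [|[|[|[|//]]]] _; rewrite ?expr0 ?expr1 //.
  by rewrite sqrCi.
by rewrite exprS sqrCi mulrN1.
Qed.

Theorem mainTheorem13 (n : nat) (arc : rel 'I_n)
  (sigma1 sigma2 : 'I_n -> 'I_n -> algC) :
  digraph arc -> bipartite arc ->
  Delta1 arc sigma1 -> Delta2 arc sigma2 ->
  (forall z : algC,
     (charpoly_sd arc sigma1).['i * z] = eps_n n * (charpoly_sd arc sigma2).[z]) /\
  (forall s1 s2 : seq algC, is_spec arc sigma1 s1 -> is_spec arc sigma2 s2 ->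
     [/\ perm_eq s1 [seq 'i * z | z <- s2],
         energy s1 = \sum_(z <- s2) `|'Im z| &
         energy s2 = \sum_(z <- s1) `|'Im z|]).
Proof.
move=> Hdig _ D1 D2.
have P1 : forall z : algC,
     (charpoly_sd arc sigma1).['i * z] = eps_n n * (charpoly_sd arc sigma2).[z].
  move=> z; rewrite /charpoly_sd (charpoly_eq _ _ _ _ Hdig D1 D2) !charpoly_ev.
  by rewrite -scale_scalar_mx -scalerBr detZ eps_nE.
split => // s1 s2 S1 S2.
have Hsz : size s2 = n.
  have := size_char_poly (adj arc sigma2); rewrite -/(charpoly_sd arc sigma2) S2.
  by rewrite size_prod_XsubC => -[].
have Hp : charpoly_sd arc sigma1 = \prod_(z <- [seq 'i * z | z <- s2]) ('X - z%:P).
  apply: poly_ev => x.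
  have -> : x = 'i * (- 'i * x) by rewrite mulrA mulrN -expr2 sqrCi opprK mul1r.
  rewrite P1 S2 !horner_prod big_map.
  set y := - 'i * x.
  rewrite eps_nE -Hsz -prod_scale_seq; apply: eq_bigr => z _.
  by rewrite !hornerXsubC mulrBr.
have Hperm : perm_eq s1 [seq 'i * z | z <- s2].
  by apply: prod_XsubC_eq; rewrite -S1 Hp.
split => //.
  by rewrite /energy (perm_big _ Hperm) big_map; apply: eq_bigr => z _; rewrite ReMil normrN.
rewrite (perm_big _ Hperm) big_map /energy; apply: eq_bigr => z _; by rewrite ImMil.
Qed.
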